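(* Let $X$ solve $dX_t=\mu_X(X_t;\theta)\,dt+\sigma_X(X_t;\theta)\,dW_t$ on $\mathcal{X}=(x_l,x_r)$ and let $Y_t=V(X_t)$, with structure $\mathcal{S}=(\theta,V)$ ($\theta$ the data-generating parameter). Assume: (a) $\mu_X(\cdot;\theta)$ and $\sigma_X^2(\cdot;\theta)>0$ are twice continuously differentiable; (b) $S(x;\theta)\to-\infty$ as $x\to x_l$ and $S(x;\theta)\to+\infty$ as $x\to x_r$; (c) $\xi(\theta)^{-1}:=\int_{\mathcal{X}}\{\sigma_X^2(x;\theta)s(x;\theta)\}^{-1}dx<\infty$; (d) $V$ is strictly increasing and twice continuously differentiable with inverse $U=V^{-1}$; (e) the drift $\mu_Y$ and diffusion $\sigma_Y^2$ of $Y$ are nonparametrically identified from the discretely sampled process $\{Y_{i\Delta}\}$. With $f_X(x;\vartheta)=\frac{\xi(\vartheta)}{\sigma_X^2(x;\vartheta)s(x;\vartheta)}$, $F_X(x;\vartheta)=\int_{x_l}^x f_X(z;\vartheta)dz$, and $f_X'$ the derivative of $f_X$ in $x$, define for $\bar x\in(0,1)$ $$\mu_{\bar X}(\bar x;\vartheta)=\mu_X(F_X^{-1}(\bar x;\vartheta);\vartheta)f_X(F_X^{-1}(\bar x;\vartheta);\vartheta)+\frac12\sigma_X^2(F_X^{-1}(\bar x;\vartheta);\vartheta)f_X'(F_X^{-1}(\bar x;\vartheta);\vartheta),$$ $$\sigma_{\bar X}(\bar x;\vartheta)=\sigma_X(F_X^{-1}(\bar x;\vartheta);\vartheta)f_X(F_X^{-1}(\bar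 x;\vartheta);\vartheta).$$ Then $\mathcal{S}$ is identified if and only if the following holds: for all $\tilde\theta\in\Theta$, [$\mu_{\bar X}(\bar x;\theta)=\mu_{\bar X}(\bar x;\tilde\theta)$ and $\sigma_{\bar X}(\bar x;\theta)=\sigma_{\bar X}(\bar x;\tilde\theta)$ for all $\bar x\in(0,1)$] if and only if $\theta=\tilde\theta$.
   Context: Scale density and scale measure: $s(x;\theta)=\exp\{-\int_{x^*}^x \frac{2\mu_X(z;\theta)}{\sigma_X^2(z;\theta)}dz\}$, $S(x;\theta)=\int_{x^*}^x s(z;\theta)dz$ for fixed $x^*\in\mathcal{X}$; under (a)–(c), $f_X$ is the stationary density of $X$. For a structure $\mathcal{S}=(\theta,V)$ with $U=V^{-1}$, the drift and diffusion of $Y$ are $\mu_Y(y;\mathcal{S})=\frac{\mu_X(U(y);\theta)}{U'(y)}-\frac12\sigma_X^2(U(y);\theta)\frac{U''(y)}{U'(y)^3}$ and $\sigma_Y(y;\mathcal{S})=\frac{\sigma_X(U(y);\theta)}{U'(y)}$. Two structures are observationally equivalent ($\mathcal{S}\sim\tilde{\mathcal{S}}$) if they yield identical $\mu_Y(\cdot)$ and $\sigma_Y(\cdot)$ on the domain of $Y$. $\mathcal{S}$ is identified (within the model of admissible structures) if $\mathcal{S}\sim\tilde{\mathcal{S}}$ implies $\mathcal{S}=\tilde{\mathcal{S}}$. *)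

(* Defs.v *)
From Stdlib Require Import Reals ClassicalEpsilon.
From Coquelicot Require Import Coquelicot.
Open Scope R_scope.

Definition in_dom (xl xr : Rbar) (x : R) : Prop := Rbar_lt xl x /\ Rbar_lt x xr.

Definition left_end (e : Rbar) : (R -> Prop) -> Prop :=
  match e with Finite a => at_right a | _ => Rbar_locally e end.
Definition right_end (e : Rbar) : (R -> Prop) -> Prop :=
  match e with Finite b => at_left b | _ => Rbar_locally e end.

Definition inv_on (f : R -> R) (D : R -> Prop) (y : R) : R :=
  epsilon (inhabits 0) (fun x => D x /\ f x = y).

Definition C2_on (D : R -> Prop) (f : R -> R) : Prop :=
  forall x, D x -> ex_derive f x /\ ex_derive (Derive f) x /\
                   continuous (Derive_n f 2) x.

Section Model.
Variables (Theta : Type) (xl xr : Rbar) (xstar : R)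
          (mu sig : Theta -> R -> R).

Definition sig2 (th : Theta) (x : R) : R := sig th x ^ 2.

Definition scale_dens (th : Theta) (x : R) : R :=
  exp (- RInt (fun z => 2 * mu th z / sig2 th z) xstar x).
Definition scale_meas (th : Theta) (x : R) : R :=
  RInt (scale_dens th) xstar x.

Definition speed_integrand (th : Theta) (x : R) : R :=
  / (sig2 th x * scale_dens th x).

Definition xi (th : Theta) : R :=
  / RInt_gen (speed_integrand th) (left_end xl) (right_end xr).

Definition assumptions_abc (th : Theta) : Prop :=
  C2_on (in_dom xl xr) (mu th) /\ C2_on (in_dom xl xr) (sig2 th) /\
  (forall x, in_dom xl xr x -> 0 < sig2 th x) /\
  filterlim (scale_meas th) (left_end xl) (Rbar_locally m_infty) /\
  filterlim (scale_meas th) (right_end xr) (Rbar_locally p_infty) /\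
  ex_RInt_gen (speed_integrand th) (left_end xl) (right_end xr).

Definition fX (th : Theta) (x : R) : R := xi th / (sig2 th x * scale_dens th x).
Definition FX (th : Theta) (x : R) : R := RInt_gen (fX th) (left_end xl) (at_point x).
Definition FXinv (th : Theta) (u : R) : R := inv_on (FX th) (in_dom xl xr) u.

Definition mu_bar (th : Theta) (u : R) : R :=
  let x := FXinv th u in
  mu th x * fX th x + / 2 * sig2 th x * Derive (fX th) x.
Definition sig_bar (th : Theta) (u : R) : R :=
  let x := FXinv th u in sig th x * fX th x.

Definition admissible_V (V : R -> R) : Prop :=
  (forall x y, in_dom xl xr x -> in_dom xl xr y -> x < y -> V x < V y) /\
  C2_on (in_dom xl xr) V /\
  (forall x, in_dom xl xr x -> 0 < Derive V x).

Definition Ydom (V : R -> R) (y : R) : Prop := exists x, in_dom xl xr x /\ V x = y.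
Definition Uinv (V : R -> R) : R -> R := inv_on V (in_dom xl xr).

Definition mu_Y (th : Theta) (V : R -> R) (y : R) : R :=
  let U := Uinv V in
  mu th (U y) / Derive U y
  - / 2 * sig2 th (U y) * Derive_n U 2 y / (Derive U y) ^ 3.
Definition sig_Y (th : Theta) (V : R -> R) (y : R) : R :=
  let U := Uinv V in sig th (U y) / Derive U y.

Definition obs_equiv (th : Theta) (V : R -> R) (th' : Theta) (V' : R -> R) : Prop :=
  (forall y, Ydom V y <-> Ydom V' y) /\
  (forall y, Ydom V y -> mu_Y th V y = mu_Y th' V' y /\ sig_Y th V y = sig_Y th' V' y).

Definition struct_eq (th : Theta) (V : R -> R) (th' : Theta) (V' : R -> R) : Prop :=
  th = th' /\ forall x, in_dom xl xr x -> V x = V' x.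

Definition identified (th : Theta) (V : R -> R) : Prop :=
  forall th' V', admissible_V V' -> obs_equiv th V th' V' -> struct_eq th V th' V'.

End Model.

(* Main.v *)
Require Import Defs.
From Stdlib Require Import Reals Lra Psatz ClassicalEpsilon.
From Coquelicot Require Import Coquelicot.
Open Scope R_scope.


Lemma Rball_iff (x e y : R) : ball x e y <-> Rabs (y - x) < e.
Proof. split; intro H; exact H. Qed.

Lemma left_gap (xl : Rbar) (x : R) : Rbar_lt xl x ->
  exists e, 0 < e /\ forall z, x - e < z -> Rbar_lt xl z.
Proof.
  destruct xl as [a| |]; simpl; intro H.
  - exists (x - a); split; [lra|]; intros; lra.
  - contradiction.
  - exists 1; split; [lra|]; auto.
Qed.

Lemma right_gap (xr : Rbar) (x : R) : Rbar_lt x xr ->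
  exists e, 0 < e /\ forall z, z < x + e -> Rbar_lt z xr.
Proof.
  destruct xr as [a| |]; simpl; intro H.
  - exists (a - x); split; [lra|]; intros; lra.
  - exists 1; split; [lra|]; auto.
  - contradiction.
Qed.

Lemma dom_locally (xl xr : Rbar) (x : R) : in_dom xl xr x ->
  exists e : posreal, forall z, Rabs (z - x) < e -> in_dom xl xr z.
Proof.
  intros [H1 H2].
  destruct (left_gap _ _ H1) as [e1 [He1 P1]].
  destruct (right_gap _ _ H2) as [e2 [He2 P2]].
  assert (He : 0 < Rmin e1 e2) by (apply Rmin_pos; lra).
  exists (mkposreal _ He); simpl; intros z Hz.
  apply Rabs_def2 in Hz.
  pose proof (Rmin_l e1 e2); pose proof (Rmin_r e1 e2).
  split; [apply P1 | apply P2]; lra.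
Qed.

Lemma dom_loc (xl xr : Rbar) (x : R) : in_dom xl xr x -> locally x (in_dom xl xr).
Proof.
  intro H; destruct (dom_locally _ _ _ H) as [e He]; exists e; intros y Hy.
  apply He; exact Hy.
Qed.

Lemma Rbar_lt_le_trans' (a : Rbar) (x y : R) : Rbar_lt a x -> x <= y -> Rbar_lt a y.
Proof. destruct a; simpl; intros; auto; lra. Qed.
Lemma Rbar_le_lt_trans' (a : Rbar) (x y : R) : Rbar_lt y a -> x <= y -> Rbar_lt x a.
Proof. destruct a; simpl; intros; auto; lra. Qed.

Lemma dom_between (xl xr : Rbar) (a b z : R) : in_dom xl xr a -> in_dom xl xr b ->
  a <= z <= b -> in_dom xl xr z.
Proof.
  intros [Ha _] [_ Hb] [H1 H2]; split.
  - eapply Rbar_lt_le_trans'; eauto.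
  - eapply Rbar_le_lt_trans'; eauto.
Qed.

Lemma dom_between' (xl xr : Rbar) (a b z : R) : in_dom xl xr a -> in_dom xl xr b ->
  Rmin a b <= z <= Rmax a b -> in_dom xl xr z.
Proof.
  intros Ha Hb Hz. unfold Rmin, Rmax in Hz. destruct (Rle_dec a b).
  - exact (dom_between _ _ a b z Ha Hb Hz).
  - apply (dom_between _ _ b a z Hb Ha); lra.
Qed.

Lemma dom_left (xl xr : Rbar) (x : R) : in_dom xl xr x -> exists a, in_dom xl xr a /\ a < x.
Proof.
  intro H; destruct (dom_locally _ _ _ H) as [e He].
  exists (x - e/2); split; [apply He|]; destruct e; simpl.
  - rewrite Rabs_left; lra.
  - lra.
Qed.
Lemma dom_right (xl xr : Rbar) (x : R) : in_dom xl xr x -> exists a, in_dom xl xr a /\ x < a.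
Proof.
  intro H; destruct (dom_locally _ _ _ H) as [e He].
  exists (x + e/2); split; [apply He|]; destruct e; simpl.
  - rewrite Rabs_right; lra.
  - lra.
Qed.

Lemma Rball_abs (x e y : R) : ball x e y -> Rabs (y - x) < e.
Proof. intro H; exact H. Qed.
Lemma abs_Rball (x e y : R) : Rabs (y - x) < e -> ball x e y.
Proof. intro H; exact H. Qed.


Lemma ex_derive_cpt (f : R -> R) x : ex_derive f x -> continuity_pt f x.
Proof. intro H. apply continuity_pt_filterlim. apply (ex_derive_continuous f x H). Qed.

Section Inv.
Variables (xl xr : Rbar) (f : R -> R).
Let D := in_dom xl xr.
Hypothesis incr : forall x y, D x -> D y -> x < y -> f x < f y.
Hypothesis der : forall x, D x -> ex_derive f x.

Definition ImS (y : R) : Prop := exists x, D x /\ f x = y.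
Let g := inv_on f D.

Lemma incr_inj x y : D x -> D y -> f x = f y -> x = y.
Proof.
  intros Hx Hy E. destruct (Rtotal_order x y) as [H|[H|H]]; auto.
  - pose proof (incr _ _ Hx Hy H); lra.
  - pose proof (incr _ _ Hy Hx H); lra.
Qed.

Lemma incr_le x y : D x -> D y -> f x <= f y -> x <= y.
Proof.
  intros Hx Hy E. destruct (Rle_dec x y) as [H|H]; auto.
  pose proof (incr _ _ Hy Hx (Rnot_le_lt _ _ H)); lra.
Qed.

Lemma incr_lt x y : D x -> D y -> f x < f y -> x < y.
Proof.
  intros Hx Hy E. destruct (Rlt_dec x y) as [H|H]; auto.
  destruct (Rle_lt_or_eq_dec y x (Rnot_lt_le _ _ H)) as [H'|H'].
  - pose proof (incr _ _ Hy Hx H'); lra.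
  - subst; lra.
Qed.

Lemma inv_spec y : ImS y -> D (g y) /\ f (g y) = y.
Proof.
  intro H. unfold g, inv_on. apply (epsilon_spec (inhabits 0) (fun x => D x /\ f x = y)).
  exact H.
Qed.

Lemma inv_f x : D x -> g (f x) = x.
Proof.
  intro Hx. destruct (inv_spec (f x)) as [H1 H2]; [exists x; auto|].
  apply incr_inj; auto.
Qed.

Lemma ivt_strict a b y : D a -> D b -> a < b -> f a < y < f b ->
  exists x, a < x < b /\ f x = y.
Proof.
  intros Ha Hb Hab Hy.
  destruct (Ranalysis5.IVT_interv (fun t => f t - y) a b) as [z [Hz1 Hz2]].
  - intros t Ht. apply continuity_pt_minus; [|apply continuity_pt_const; intros u v; reflexivity].
    apply ex_derive_cpt, der. apply (dom_between _ _ a b); auto.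
  - exact Hab.
  - lra.
  - lra.
  - exists z. assert (f z = y) by lra. split; auto.
    destruct Hz1 as [H1 H2]; split.
    + destruct (Rle_lt_or_eq_dec _ _ H1); auto. subst; lra.
    + destruct (Rle_lt_or_eq_dec _ _ H2); auto. subst; lra.
Qed.

Lemma Im_between a b y : D a -> D b -> f a <= y <= f b -> ImS y.
Proof.
  intros Ha Hb [H1 H2].
  destruct (Rle_lt_or_eq_dec _ _ H1) as [H1'|H1']; [|exists a; auto].
  destruct (Rle_lt_or_eq_dec _ _ H2) as [H2'|H2']; [|exists b; auto].
  assert (a < b) by (apply incr_lt; auto; lra).
  destruct (ivt_strict a b y Ha Hb H (conj H1' H2')) as [x [Hx Ex]].
  exists x; split; auto. apply (dom_between _ _ a b); auto; lra.
Qed.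

Lemma Im_loc x0 : D x0 -> exists e : posreal, forall y, Rabs (y - f x0) < e -> ImS y.
Proof.
  intro H0. destruct (dom_left _ _ _ H0) as [a [Ha Ha']].
  destruct (dom_right _ _ _ H0) as [b [Hb Hb']].
  pose proof (incr _ _ Ha H0 Ha'). pose proof (incr _ _ H0 Hb Hb').
  assert (He : 0 < Rmin (f x0 - f a) (f b - f x0)) by (apply Rmin_pos; lra).
  exists (mkposreal _ He); simpl; intros y Hy. apply Rabs_def2 in Hy.
  pose proof (Rmin_l (f x0 - f a) (f b - f x0)); pose proof (Rmin_r (f x0 - f a) (f b - f x0)).
  apply (Im_between a b); auto; lra.
Qed.

Lemma Im_locally x0 : D x0 -> locally (f x0) ImS.
Proof.
  intro H; destruct (Im_loc x0 H) as [e He]; exists e; intros y Hy; apply He; exact Hy.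
Qed.

Lemma Im_locally' y : ImS y -> locally y ImS.
Proof.
  intros [x [Hx <-]]. apply Im_locally; auto.
Qed.

Lemma inv_derive x0 : D x0 -> Derive f x0 <> 0 -> is_derive g (f x0) (/ Derive f x0).
Proof.
  intros H0 Hd. destruct (dom_left _ _ _ H0) as [a [Ha Ha']].
  destruct (dom_right _ _ _ H0) as [b [Hb Hb']].
  pose proof (incr _ _ Ha H0 Ha'). pose proof (incr _ _ H0 Hb Hb').
  assert (Hcomp : forall y, f a <= y <= f b -> comp f g y = id y).
  { intros y Hy. unfold comp, id. apply inv_spec. apply (Im_between a b); auto. }
  assert (Hrng : forall y, f a <= y <= f b -> a <= g y <= b).
  { intros y Hy. destruct (inv_spec y) as [G1 G2]; [apply (Im_between a b); auto|].
    split; apply incr_le; auto; lra. }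
  assert (Hcont : continuity_pt g (f x0)).
  { apply (Ranalysis5.continuity_pt_recip_interv f g a b); try lra.
    - intros x y Hx Hxy Hy. apply incr; auto; apply (dom_between _ _ a b); auto; lra.
    - intros y Y1 Y2. apply Hcomp; lra.
    - intros y Y1 Y2. apply Hrng; lra.
    - intros t Ht. apply ex_derive_cpt, der; apply (dom_between _ _ a b); auto.
  }
  assert (Prf : forall z, g (f a) <= z <= g (f b) -> derivable_pt f z).
  { intros z Hz. rewrite !inv_f in Hz by auto. apply ex_derive_Reals_0, der.
    apply (dom_between _ _ a b); auto. }
  assert (Pin : g (f a) <= g (f x0) <= g (f b)).
  { rewrite !inv_f by auto. lra. }
  pose proof (Ranalysis5.derivable_pt_lim_recip_interv f g (f a) (f b) (f x0) Prf Hcont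
     ltac:(lra) ltac:(lra) Pin Hcomp) as HH.
  rewrite Derive_Reals in HH. rewrite inv_f in HH by auto.
  apply is_derive_Reals. replace (/ Derive f x0) with (1 / Derive f x0) by (field; auto).
  apply HH; auto.
Qed.

Lemma inv_continuous y : ImS y -> (forall x, D x -> Derive f x <> 0) -> continuous g y.
Proof.
  intros [x [Hx <-]] Hd. apply (ex_derive_continuous g).
  eexists; apply inv_derive; auto.
Qed.

End Inv.


Lemma cont_mult (f g : R -> R) x : continuous f x -> continuous g x ->
  continuous (fun y => f y * g y) x.
Proof. intros; apply (continuous_mult f g); auto. Qed.
Lemma cont_plus (f g : R -> R) x : continuous f x -> continuous g x ->
  continuous (fun y => f y + g y) x.
Proof. intros; apply (continuous_plus f g); auto. Qed.
Lemma cont_opp (f : R -> R) x : continuous f x -> continuous (fun y => - f y) x.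
Proof. intros; apply (continuous_opp f); auto. Qed.
Lemma cont_comp (f g : R -> R) x : continuous g x -> continuous f (g x) ->
  continuous (fun y => f (g y)) x.
Proof. intros; apply (continuous_comp g f); auto. Qed.
Lemma cont_inv (f : R -> R) x : continuous f x -> f x <> 0 -> continuous (fun y => / f y) x.
Proof. intros; apply continuous_Rinv_comp; auto. Qed.
Lemma cont_const (c x : R) : continuous (fun _ : R => c) x.
Proof. apply continuous_const. Qed.

Definition Open (D : R -> Prop) := forall x, D x -> locally x D.

Lemma dom_Open xl xr : Open (in_dom xl xr).
Proof. intros x Hx; apply dom_loc; auto. Qed.

Lemma loc_and (P Q : R -> Prop) x : locally x P -> locally x Q -> locally x (fun y => P y /\ Q y).
Proof. intros; apply filter_and; auto. Qed.

Lemma loc_imp (P Q : R -> Prop) x : locally x P -> (forall y, P y -> Q y) -> locally x Q.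
Proof. intros H1 H2; eapply filter_imp; eauto. Qed.

Lemma Derive_eq_on (D : R -> Prop) (f g : R -> R) x : Open D -> D x ->
  (forall y, D y -> f y = g y) -> Derive f x = Derive g x.
Proof.
  intros HO Hx H; apply Derive_ext_loc. apply (loc_imp D); auto.
Qed.

Lemma Derive2_eq_on (D : R -> Prop) (f g : R -> R) x : Open D -> D x ->
  (forall y, D y -> f y = g y) -> Derive_n f 2 x = Derive_n g 2 x.
Proof.
  intros HO Hx H; apply Derive_n_ext_loc. apply (loc_imp D); auto.
Qed.

Section C2.
Variable D : R -> Prop.
Variable f : R -> R.
Hypothesis Hf : C2_on D f.

Lemma C2_d x : D x -> is_derive f x (Derive f x).
Proof. intro H; apply Derive_correct, Hf, H. Qed.
Lemma C2_dd x : D x -> is_derive (Derive f) x (Derive_n f 2 x).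
Proof. intro H; apply Derive_correct, Hf, H. Qed.
Lemma C2_c x : D x -> continuous f x.
Proof. intro H; apply (ex_derive_continuous f x); apply Hf, H. Qed.
Lemma C2_dc x : D x -> continuous (Derive f) x.
Proof. intro H; apply (ex_derive_continuous (Derive f) x); apply Hf, H. Qed.
Lemma C2_ddc x : D x -> continuous (Derive_n f 2) x.
Proof. intro H; apply Hf, H. Qed.
End C2.

Lemma C2_ext (D : R -> Prop) f g : Open D -> (forall x, D x -> f x = g x) -> C2_on D f -> C2_on D g.
Proof.
  intros HO E Hf x Hx.
  assert (E1 : forall y, D y -> Derive f y = Derive g y).
  { intros y Hy; apply (Derive_eq_on D); auto. }
  assert (E2 : forall y, D y -> Derive_n f 2 y = Derive_n g 2 y).
  { intros y Hy; apply (Derive2_eq_on D); auto. }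
  destruct (Hf x Hx) as [A [B C]]. split; [|split].
  - exists (Derive f x). apply (is_derive_ext_loc f); [apply (loc_imp D); auto|].
    apply Derive_correct; auto.
  - exists (Derive_n f 2 x). apply (is_derive_ext_loc (Derive f)); [apply (loc_imp D); auto|].
    apply Derive_correct; auto.
  - apply (continuous_ext_loc _ (Derive_n f 2)); auto. apply (loc_imp D); auto.
Qed.

Section Comp.
Variables (D E : R -> Prop) (f g : R -> R).
Hypothesis HD : Open D.
Hypothesis Hf : C2_on E f.
Hypothesis Hg : C2_on D g.
Hypothesis Hmap : forall x, D x -> E (g x).

Lemma comp_d x : D x -> is_derive (fun y => f (g y)) x (Derive f (g x) * Derive g x).
Proof.
  intro Hx. rewrite Rmult_comm.
  apply (is_derive_comp f g x); [apply (C2_d E); auto | apply (C2_d D); auto].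
Qed.

Lemma comp_D x : D x -> Derive (fun y => f (g y)) x = Derive f (g x) * Derive g x.
Proof. intro Hx; apply is_derive_unique, comp_d; auto. Qed.

Let d2 := fun x => Derive_n f 2 (g x) * (Derive g x)^2 + Derive f (g x) * Derive_n g 2 x.

Lemma comp_dd x : D x -> is_derive (Derive (fun y => f (g y))) x (d2 x).
Proof.
  intro Hx. apply (is_derive_ext_loc (fun y => Derive f (g y) * Derive g y)).
  { apply (loc_imp D); auto. intros y Hy; rewrite comp_D; auto. }
  unfold d2.
  replace (Derive_n f 2 (g x) * Derive g x ^ 2 + Derive f (g x) * Derive_n g 2 x)
    with (plus (mult (Derive g x * Derive_n f 2 (g x)) (Derive g x)) (mult (Derive f (g x)) (Derive_n g 2 x)))
    by (unfold plus, mult; simpl; ring).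
  apply (is_derive_mult (fun y => Derive f (g y)) (Derive g)).
  - apply (is_derive_comp (Derive f) g x). apply (C2_dd E); auto. apply (C2_d D); auto.
  - apply (C2_dd D); auto.
  - intros; apply Rmult_comm.
Qed.

Lemma comp_DD x : D x -> Derive_n (fun y => f (g y)) 2 x =
  Derive_n f 2 (g x) * (Derive g x)^2 + Derive f (g x) * Derive_n g 2 x.
Proof. intro Hx; apply is_derive_unique, comp_dd; auto. Qed.

Lemma comp_C2 : C2_on D (fun y => f (g y)).
Proof.
  intros x Hx. split; [|split].
  - eexists; apply comp_d; auto.
  - eexists; apply comp_dd; auto.
  - apply (continuous_ext_loc _ d2).
    { apply (loc_imp D); auto. intros y Hy. rewrite comp_DD; auto. }
    unfold d2. apply cont_plus; apply cont_mult.
    + apply (cont_comp (Derive_n f 2)). apply (C2_c D); auto. apply (C2_ddc E); auto.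
    + apply (cont_mult (fun y => Derive g y) (fun y => Derive g y * 1)).
      apply (C2_dc D); auto. apply cont_mult. apply (C2_dc D); auto. apply cont_const.
    + apply (cont_comp (Derive f)). apply (C2_c D); auto. apply (C2_dc E); auto.
    + apply (C2_ddc D); auto.
Qed.
End Comp.

Section InvC2.
Variables (xl xr : Rbar) (f : R -> R).
Local Notation D := (in_dom xl xr).
Hypothesis incr : forall x y, D x -> D y -> x < y -> f x < f y.
Hypothesis Hf : C2_on D f.
Hypothesis pos : forall x, D x -> 0 < Derive f x.
Local Notation g := (inv_on f (in_dom xl xr)).
Local Notation I := (ImS xl xr f).

Lemma fder x : D x -> ex_derive f x.
Proof. intro H; apply Hf, H. Qed.

Lemma invD y : I y -> Derive g y = / Derive f (g y).
Proof.
  intros Hy. destruct (inv_spec xl xr f y Hy) as [H1 H2].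
  assert (K : is_derive g (f (g y)) (/ Derive f (g y))).
  { apply inv_derive; auto. apply fder. pose proof (pos _ H1); intro; lra. }
  rewrite H2 in K. apply is_derive_unique; exact K.
Qed.

Let d2 := fun y => - Derive_n f 2 (g y) / (Derive f (g y))^3.

Lemma inv_dd y : I y -> is_derive (Derive g) y (d2 y).
Proof.
  intros Hy. destruct (inv_spec xl xr f y Hy) as [H1 H2].
  pose proof (pos _ H1).
  apply (is_derive_ext_loc (fun z => / Derive f (g z))).
  { apply (loc_imp I). apply Im_locally'; auto. apply fder. intros; rewrite invD; auto. }
  unfold d2.
  replace (- Derive_n f 2 (g y) / Derive f (g y) ^ 3) with
     (- (scal (/ Derive f (g y)) (Derive_n f 2 (g y))) / (Derive f (g y))^2)
     by (unfold scal; simpl; unfold mult; simpl; field; lra).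
  apply (is_derive_inv (fun z => Derive f (g z))); [|intro; lra].
  apply (is_derive_comp (Derive f) g). apply (C2_dd D); auto.
  assert (K : is_derive g (f (g y)) (/ Derive f (g y))).
  { apply inv_derive; auto. apply fder. intro; lra. }
  rewrite H2 in K. exact K.
Qed.

Lemma invDD y : I y -> Derive_n g 2 y = - Derive_n f 2 (g y) / (Derive f (g y))^3.
Proof. intro Hy; apply is_derive_unique, inv_dd; auto. Qed.

Lemma inv_C2 : C2_on I g.
Proof.
  intros y Hy. destruct (inv_spec xl xr f y Hy) as [H1 H2].
  pose proof (pos _ H1).
  assert (Hgc : continuous g y).
  { apply inv_continuous; auto. apply fder. intros x Hx; pose proof (pos _ Hx); intro; lra. }
  split; [|split].
  - exists (/ Derive f (g y)).
    assert (K : is_derive g (f (g y)) (/ Derive f (g y))).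
    { apply inv_derive; auto. apply fder. intro; lra. }
    rewrite H2 in K. exact K.
  - eexists; apply inv_dd; auto.
  - apply (continuous_ext_loc _ d2).
    { apply (loc_imp I). apply Im_locally'; auto. apply fder. intros z Hz. rewrite invDD; auto. }
    unfold d2. unfold Rdiv. apply cont_mult.
    + apply cont_opp. apply (cont_comp (Derive_n f 2)); auto. apply (C2_ddc D); auto.
    + apply (cont_inv (fun z => Derive f (g z) ^ 3)); [|apply pow_nonzero; lra].
      simpl. apply cont_mult. apply (cont_comp (Derive f)); auto. apply (C2_dc D); auto.
      apply cont_mult. apply (cont_comp (Derive f)); auto. apply (C2_dc D); auto.
      apply cont_mult. apply (cont_comp (Derive f)); auto. apply (C2_dc D); auto.
      apply cont_const.
Qed.

Lemma inv_incr y z : I y -> I z -> y < z -> g y < g z.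
Proof.
  intros Hy Hz Hyz. destruct (inv_spec xl xr f y Hy) as [A1 A2].
  destruct (inv_spec xl xr f z Hz) as [B1 B2].
  apply (incr_lt xl xr f incr); auto. lra.
Qed.

End InvC2.


Lemma lim_ball {T} (F : (T -> Prop) -> Prop) {FF : Filter F} (h : T -> R) l (e : R) :
  0 < e -> filterlim h F (locally l) -> F (fun a => Rabs (h a - l) < e).
Proof.
  intros He Hl. apply (proj1 (filterlim_locally h l) Hl (mkposreal e He)).
Qed.

Lemma lim_lt {T} (F : (T -> Prop) -> Prop) {FF : Filter F} (h : T -> R) l m :
  filterlim h F (locally l) -> l < m -> F (fun a => h a < m).
Proof.
  intros Hl Hm. eapply filter_imp; [|apply (lim_ball F h l (m - l)); auto; lra].
  intros a Ha; apply Rabs_def2 in Ha; lra.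
Qed.

Lemma lim_gt {T} (F : (T -> Prop) -> Prop) {FF : Filter F} (h : T -> R) l m :
  filterlim h F (locally l) -> m < l -> F (fun a => m < h a).
Proof.
  intros Hl Hm. eapply filter_imp; [|apply (lim_ball F h l (l - m)); auto; lra].
  intros a Ha; apply Rabs_def2 in Ha; lra.
Qed.

Lemma lim_ge {T} (F : (T -> Prop) -> Prop) {FF : ProperFilter F} (h : T -> R) l m :
  filterlim h F (locally l) -> F (fun a => m <= h a) -> m <= l.
Proof.
  intros Hl Hm. destruct (Rle_dec m l) as [H|H]; auto. exfalso.
  assert (l < m) by lra.
  destruct (filter_ex _ (filter_and _ _ Hm (lim_lt F h l m Hl H0))) as [a [A B]]. lra.
Qed.

Lemma split_lim (Fa Fb : (R -> Prop) -> Prop) {FA : ProperFilter Fa} {FB : ProperFilter Fb}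
  (phi psi : R -> R) (L : R) :
  filterlim (fun ab : R * R => phi (fst ab) + psi (snd ab)) (filter_prod Fa Fb) (locally L) ->
  exists l, filterlim phi Fa (locally l) /\ filterlim psi Fb (locally (L - l)).
Proof.
  intros HL.
  assert (Hb : forall e, 0 < e -> exists P Q, Fa P /\ Fb Q /\
             forall a b, P a -> Q b -> Rabs (phi a + psi b - L) < e).
  { intros e He. pose proof (lim_ball (filter_prod Fa Fb) _ L e He HL) as H.
    destruct H as [P Q HP HQ HPQ]. exists P, Q; split; [auto|split; [auto|]].
    intros a b Ha Hb'; apply (HPQ a b Ha Hb'). }
  assert (Hc : cauchy (filtermap phi Fa)).
  { intros eps. destruct (Hb (eps / 2) ltac:(destruct eps; simpl; lra)) as [P [Q [HP [HQ HPQ]]]].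
    destruct (filter_ex _ HP) as [a0 Ha0]. destruct (filter_ex _ HQ) as [b0 Hb0].
    exists (phi a0). unfold filtermap. eapply filter_imp; [|exact HP].
    intros a Ha. apply abs_Rball.
    pose proof (HPQ a b0 Ha Hb0). pose proof (HPQ a0 b0 Ha0 Hb0).
    apply Rabs_def2 in H; apply Rabs_def2 in H0. apply Rabs_def1; lra. }
  set (l := lim (filtermap phi Fa)).
  assert (Hl : filterlim phi Fa (locally l)).
  { apply filterlim_locally. intros eps.
    pose proof (complete_cauchy (filtermap phi Fa) (filtermap_proper_filter _ _ phi Fa FA) Hc eps).
    exact H. }
  exists l; split; auto.
  apply filterlim_locally. intros eps.
  destruct (Hb (eps / 2) ltac:(destruct eps; simpl; lra)) as [P [Q [HP [HQ HPQ]]]].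
  pose proof (lim_ball Fa phi l (eps/2) ltac:(destruct eps; simpl; lra) Hl) as H1.
  destruct (filter_ex _ (filter_and _ _ HP H1)) as [a [Ha1 Ha2]].
  eapply filter_imp; [|exact HQ]. intros b Hb'. apply abs_Rball.
  pose proof (HPQ a b Ha1 Hb'). apply Rabs_def2 in H; apply Rabs_def2 in Ha2.
  apply Rabs_def1; lra.
Qed.


Lemma exRInt_cont (f : R -> R) a b :
  (forall z, Rmin a b <= z <= Rmax a b -> continuous f z) -> ex_RInt f a b.
Proof. intro H. apply (@ex_RInt_continuous R_CompleteNormedModule); auto. Qed.

Lemma is_derive_cst (c x : R) : is_derive (fun _ : R => c) x 0.
Proof. exact (@is_derive_const R_AbsRing R_NormedModule c x). Qed.

Lemma RInt_uniq (f : R -> R) a b l : is_RInt f a b l -> RInt f a b = l.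
Proof. intro H. apply (@is_RInt_unique R_CompleteNormedModule); auto. Qed.

Lemma RInt_corr (f : R -> R) a b : ex_RInt f a b -> is_RInt f a b (RInt f a b).
Proof. intro H. apply (@RInt_correct R_CompleteNormedModule); auto. Qed.

Lemma RInt_gen_corr_R Fa Fb (f:R->R) : ProperFilter Fa -> ProperFilter Fb -> ex_RInt_gen f Fa Fb -> is_RInt_gen f Fa Fb (RInt_gen f Fa Fb).
Proof. intros H1 H2 H3. apply (@RInt_gen_correct R_CompleteNormedModule Fa Fb (Proper_StrongProper _ H1) (Proper_StrongProper _ H2) f H3). Qed.
Lemma RInt_gen_uniq_R Fa Fb (f:R->R) l : ProperFilter Fa -> ProperFilter Fb -> is_RInt_gen f Fa Fb l -> RInt_gen f Fa Fb = l.
Proof. intros H1 H2 H3. apply (@is_RInt_gen_unique R_CompleteNormedModule Fa Fb (Proper_StrongProper _ H1) (Proper_StrongProper _ H2) f l H3). Qed.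

Section Model.
Variables (Theta : Type) (xl xr : Rbar) (xstar : R) (mu sig : Theta -> R -> R).
Hypothesis hlr : Rbar_lt xl xr.
Hypothesis hstar : in_dom xl xr xstar.
Hypothesis habc : forall th, assumptions_abc Theta xl xr xstar mu sig th.
Local Notation D := (in_dom xl xr).
Local Notation S2 th := (sig2 Theta sig th).
Local Notation sd th := (scale_dens Theta xstar mu sig th).
Local Notation spd th := (speed_integrand Theta xstar mu sig th).
Local Notation XI th := (xi Theta xl xr xstar mu sig th).
Local Notation fx th := (fX Theta xl xr xstar mu sig th).
Local Notation Fx th := (FX Theta xl xr xstar mu sig th).
Local Notation Fxinv th := (FXinv Theta xl xr xstar mu sig th).
Local Notation kk th := (fun z => 2 * mu th z / sig2 Theta sig th z).
Local Notation II th := (fun x => RInt (fun z => 2 * mu th z / sig2 Theta sig th z) xstar x).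

Lemma mu_C2 th : C2_on D (mu th).
Proof. apply (habc th). Qed.
Lemma S2_C2 th : C2_on D (S2 th).
Proof. apply (habc th). Qed.
Lemma S2_pos th x : D x -> 0 < S2 th x.
Proof. apply (habc th). Qed.
Lemma spd_ex th : ex_RInt_gen (spd th) (left_end xl) (right_end xr).
Proof. apply (habc th). Qed.

Lemma kk_cont th x : D x -> continuous (kk th) x.
Proof.
  intro Hx. unfold Rdiv. apply cont_mult.
  - apply (cont_mult (fun _ => 2)). apply cont_const. apply (C2_c D); auto. apply mu_C2.
  - apply cont_inv. apply (C2_c D); auto. apply S2_C2. pose proof (S2_pos th x Hx); intro; lra.
Qed.

Lemma kk_int th a b : D a -> D b -> ex_RInt (kk th) a b.
Proof.
  intros Ha Hb. apply exRInt_cont. intros z Hz. apply kk_cont.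
  apply (dom_between' xl xr a b); auto.
Qed.

Lemma II_d th x : D x -> is_derive (II th) x (kk th x).
Proof.
  intro Hx. apply (is_derive_RInt (kk th) (II th) xstar x).
  - apply (loc_imp D). apply dom_loc; auto. intros y Hy. apply RInt_corr, kk_int; auto.
  - apply kk_cont; auto.
Qed.

Lemma sd_pos th x : 0 < sd th x.
Proof. apply exp_pos. Qed.

Lemma sd_d th x : D x -> is_derive (sd th) x (- kk th x * sd th x).
Proof.
  intro Hx. unfold scale_dens.
  replace (- kk th x * exp (- RInt (kk th) xstar x)) with
    (scal (opp (kk th x)) (exp (- RInt (kk th) xstar x))) by (unfold scal, opp; simpl; unfold mult; simpl; ring).
  apply (is_derive_comp exp (fun x => - RInt (kk th) xstar x)).
  - apply is_derive_exp.
  - apply (is_derive_opp (II th)). apply II_d; auto.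
Qed.

Lemma sd_c th x : D x -> continuous (sd th) x.
Proof. intro Hx; apply (ex_derive_continuous (sd th) x); eexists; apply sd_d; auto. Qed.

Lemma spd_pos th x : D x -> 0 < spd th x.
Proof.
  intro Hx; unfold speed_integrand. apply Rinv_0_lt_compat, Rmult_lt_0_compat.
  apply S2_pos; auto. apply sd_pos.
Qed.

Lemma spd_cont th x : D x -> continuous (spd th) x.
Proof.
  intro Hx; unfold speed_integrand. apply cont_inv.
  apply cont_mult. apply (C2_c D); auto. apply S2_C2. apply sd_c; auto.
  pose proof (S2_pos th x Hx); pose proof (sd_pos th x). apply Rgt_not_eq. apply Rmult_lt_0_compat; lra.
Qed.

Lemma spd_int th a b : D a -> D b -> ex_RInt (spd th) a b.
Proof.
  intros Ha Hb. apply exRInt_cont. intros z Hz. apply spd_cont.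
  apply (dom_between' xl xr a b); auto.
Qed.

Definition dfx th x := - XI th * (Derive (S2 th) x * sd th x + S2 th x * (- kk th x * sd th x))
   / (S2 th x * sd th x)^2.

Lemma fx_d th x : D x -> is_derive (fx th) x (dfx th x).
Proof.
  intro Hx. unfold fX, dfx. pose proof (S2_pos th x Hx); pose proof (sd_pos th x).
  unfold Rdiv at 1.
  replace (- XI th * (Derive (S2 th) x * sd th x + S2 th x * (- kk th x * sd th x)) /
      (S2 th x * sd th x) ^ 2) with
    (XI th * (- (plus (mult (Derive (S2 th) x) (sd th x)) (mult (S2 th x) (- kk th x * sd th x)))
        / (S2 th x * sd th x) ^ 2)) by (unfold plus, mult; simpl; field; split; lra).
  apply (is_derive_scal (fun y => / (S2 th y * sd th y))).
  apply (is_derive_inv (fun y => S2 th y * sd th y)).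
  - apply (is_derive_mult (S2 th) (sd th)). apply (C2_d D); auto. apply S2_C2. apply sd_d; auto.
    intros; apply Rmult_comm.
  - apply Rgt_not_eq, Rmult_lt_0_compat; lra.
Qed.

Lemma fx_D th x : D x -> Derive (fx th) x = dfx th x.
Proof. intro; apply is_derive_unique, fx_d; auto. Qed.

Lemma dfx_cont th x : D x -> continuous (dfx th) x.
Proof.
  intro Hx. unfold dfx. pose proof (S2_pos th x Hx); pose proof (sd_pos th x).
  unfold Rdiv. apply cont_mult.
  - apply (cont_mult (fun _ => - XI th)). apply cont_const.
    apply cont_plus. apply cont_mult. apply (C2_dc D); auto. apply S2_C2. apply sd_c; auto.
    apply cont_mult. apply (C2_c D); auto. apply S2_C2. apply cont_mult. apply cont_opp. apply kk_cont; auto.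
    apply sd_c; auto.
  - apply (cont_inv (fun y => (S2 th y * sd th y)^2)).
    simpl. apply cont_mult. apply cont_mult. apply (C2_c D); auto. apply S2_C2. apply sd_c; auto.
    apply cont_mult. apply cont_mult. apply (C2_c D); auto. apply S2_C2. apply sd_c; auto. apply cont_const.
    apply pow_nonzero. apply Rgt_not_eq, Rmult_lt_0_compat; lra.
Qed.

Lemma fx_C1 th x : D x -> ex_derive (fx th) x /\ continuous (Derive (fx th)) x.
Proof.
  intro Hx. split. eexists; apply fx_d; auto.
  apply (continuous_ext_loc _ (dfx th)). apply (loc_imp D). apply dom_loc; auto.
  intros; rewrite fx_D; auto. apply dfx_cont; auto.
Qed.



Lemma atp_proper (x : R) : ProperFilter (at_point x).
Proof.
  constructor.
  - intros P H; exists x; exact H.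
  - constructor; unfold at_point; auto.
Qed.

Lemma Fl_proper : ProperFilter (left_end xl).
Proof. destruct xl; simpl; [apply at_right_proper_filter|apply Rbar_locally_filter|apply Rbar_locally_filter]. Qed.
Lemma Fr_proper : ProperFilter (right_end xr).
Proof. destruct xr; simpl; [apply at_left_proper_filter|apply Rbar_locally_filter|apply Rbar_locally_filter]. Qed.

Lemma Fl_ev a0 : D a0 -> left_end xl (fun a => D a /\ a < a0).
Proof.
  intros [H1 H2]. destruct xl as [l| |]; simpl in *.
  - assert (He : 0 < a0 - l) by lra. exists (mkposreal _ He). simpl. intros y Hy Hly.
    apply Rball_abs in Hy. apply Rabs_def2 in Hy.
    split; [split|]; simpl; auto; [|lra]. apply (Rbar_le_lt_trans' xr y a0); auto; lra.
  - contradiction.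
  - exists a0. intros y Hy. split; [split|]; simpl; auto.
    apply (Rbar_le_lt_trans' xr y a0); auto; lra.
Qed.

Lemma Fr_ev b0 : D b0 -> right_end xr (fun b => D b /\ b0 < b).
Proof.
  intros [H1 H2]. destruct xr as [r| |]; simpl in *.
  - assert (He : 0 < r - b0) by lra. exists (mkposreal _ He). simpl. intros y Hy Hly.
    apply Rball_abs in Hy. apply Rabs_def2 in Hy.
    split; [split|]; simpl; auto; [|lra]. apply (Rbar_lt_le_trans' xl b0 y); auto; lra.
  - exists b0. intros y Hy. split; [split|]; simpl; auto.
    apply (Rbar_lt_le_trans' xl b0 y); auto; lra.
  - contradiction.
Qed.

Lemma Chasles_R (f : R -> R) a b c : ex_RInt f a b -> ex_RInt f b c ->
  RInt f a b + RInt f b c = RInt f a c.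
Proof. intros; apply (@RInt_Chasles R_CompleteNormedModule); auto. Qed.

Lemma spd_Chasles th a b c : D a -> D b -> D c ->
  RInt (spd th) a b + RInt (spd th) b c = RInt (spd th) a c.
Proof. intros; apply Chasles_R; apply spd_int; auto. Qed.

Lemma spd_RInt_pos th a b : D a -> D b -> a < b -> 0 < RInt (spd th) a b.
Proof.
  intros Ha Hb Hab. apply RInt_gt_0; auto.
  - intros x Hx; apply spd_pos; apply (dom_between xl xr a b); auto; lra.
  - intros x Hx; apply spd_cont; apply (dom_between xl xr a b); auto.
Qed.

Lemma total_lim th :
  filterlim (fun ab : R * R => RInt (spd th) (fst ab) xstar + RInt (spd th) xstar (snd ab))
    (filter_prod (left_end xl) (right_end xr)) (locally (RInt_gen (spd th) (left_end xl) (right_end xr))).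
Proof.
  pose proof Fl_proper; pose proof Fr_proper.
  pose proof (RInt_gen_corr_R _ _ _ H H0 (spd_ex th)) as HT.
  intros P HP. specialize (HT P HP). unfold filtermapi in HT. unfold filtermap.
  assert (HD : filter_prod (left_end xl) (right_end xr) (fun ab : R * R => D (fst ab) /\ D (snd ab))).
  { apply (Filter_prod _ _ _ (fun a => D a /\ a < xstar) (fun b => D b /\ xstar < b)).
    apply Fl_ev; auto. apply Fr_ev; auto. intros a b [A _] [B _]; simpl; auto. }
  eapply filter_imp; [|apply (filter_and _ _ HT HD)].
  intros [a b] [[y [Hy Py]] [Da Db]]; simpl in *.
  rewrite (spd_Chasles th a xstar b); auto.
  apply RInt_uniq in Hy. rewrite Hy; auto.
Qed.

Lemma loc_shift (P : R -> Prop) l c : locally (l + c) P -> locally l (fun v => P (v + c)).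
Proof.
  intros [e He]. exists e. intros y Hy. apply He. apply abs_Rball. apply Rball_abs in Hy.
  replace (y + c - (l + c)) with (y - l) by ring. exact Hy.
Qed.

Lemma F_struct th : exists H0 L, 0 < L /\ XI th = / L /\
  (forall x, D x -> Fx th x = / L * (H0 + RInt (spd th) xstar x) /\
                    0 < H0 + RInt (spd th) xstar x < L) /\
  (forall u, 0 < u < 1 -> exists x1 x2, D x1 /\ D x2 /\ Fx th x1 < u /\ u < Fx th x2).
Proof.
  pose proof Fl_proper as PFl; pose proof Fr_proper as PFr.
  set (L := RInt_gen (spd th) (left_end xl) (right_end xr)).
  set (phi := fun a => RInt (spd th) a xstar).
  set (psi := fun b => RInt (spd th) xstar b).
  destruct (split_lim _ _ phi psi L (total_lim th)) as [H0 [Hphi Hpsi]].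
  set (c := fun x => RInt (spd th) xstar x).
  assert (Hleft : forall x, D x -> is_RInt_gen (spd th) (left_end xl) (at_point x) (H0 + c x)).
  { intros x Hx P HP. unfold filtermapi.
    apply (Filter_prod _ _ _ (fun a => D a /\ P (phi a + c x)) (fun b => b = x)).
    - eapply filter_imp; [|apply (filter_and _ _ (Fl_ev xstar hstar) (Hphi _ (loc_shift P H0 (c x) HP)))].
      intros a [[Da _] Pa]; split; auto.
    - reflexivity.
    - intros a b [Da Pa] ->. exists (RInt (spd th) a x). split; [apply RInt_corr, spd_int; auto|].
      simpl. rewrite <- (spd_Chasles th a xstar x); auto. }
  assert (HF : forall x, D x -> Fx th x = XI th * (H0 + c x)).
  { intros x Hx. unfold FX.
    apply (RInt_gen_uniq_R _ _ _ _ PFl (atp_proper x)).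
    apply (is_RInt_gen_scal (Fa := left_end xl) (Fb := at_point x) (spd th) (XI th)); auto. }
  assert (Hpos : forall x, D x -> 0 < H0 + c x).
  { intros x Hx. destruct (dom_left _ _ _ Hx) as [a1 [Da1 Ha1]].
    apply Rlt_le_trans with (RInt (spd th) a1 x). apply spd_RInt_pos; auto.
    apply (lim_ge (left_end xl) (fun a => phi a + c x)).
    - apply (filterlim_comp _ _ _ phi (fun v => v + c x) _ (locally H0)); auto.
      apply (continuous_plus (fun v => v) (fun _ => c x)). apply continuous_id. apply continuous_const.
    - eapply filter_imp; [|apply (Fl_ev a1 Da1)]. intros a [Da Ha].
      unfold phi, c. rewrite spd_Chasles; auto. rewrite <- (spd_Chasles th a a1 x); auto.
      pose proof (spd_RInt_pos th a a1 Da Da1 Ha). lra. }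
  assert (Hlt : forall x, D x -> H0 + c x < L).
  { intros x Hx. destruct (dom_right _ _ _ Hx) as [b1 [Db1 Hb1]].
    assert (L - H0 - c x >= RInt (spd th) x b1); [|pose proof (spd_RInt_pos th x b1 Hx Db1 Hb1); lra].
    apply Rle_ge.
    apply (lim_ge (right_end xr) (fun b => psi b - c x)).
    - apply (filterlim_comp _ _ _ psi (fun v => v - c x) _ (locally (L - H0))); auto.
      apply (continuous_minus (fun v => v) (fun _ => c x)). apply continuous_id. apply continuous_const.
    - eapply filter_imp; [|apply (Fr_ev b1 Db1)]. intros b [Db Hb].
      unfold psi, c. rewrite <- (spd_Chasles th xstar x b); auto.
      rewrite <- (spd_Chasles th x b1 b); auto.
      pose proof (spd_RInt_pos th b1 b Db1 Db Hb). lra. }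
  assert (HL : 0 < L) by (pose proof (Hpos _ hstar); pose proof (Hlt _ hstar); lra).
  exists H0, L. split; auto. split; [reflexivity|]. split.
  - intros x Hx. split; [rewrite HF; auto|]. split; auto.
  - intros u Hu.
    assert (Ec : forall a, D a -> c a = - phi a).
    { intros a Da. unfold c, phi. pose proof (spd_Chasles th a xstar a Da hstar Da).
      rewrite RInt_point in H. unfold zero in H; simpl in H. lra. }
    pose proof (lim_gt _ phi H0 (H0 - u * L) Hphi ltac:(nra)) as E1.
    destruct (filter_ex _ (filter_and _ _ E1 (Fl_ev xstar hstar))) as [x1 [A1 [B1 _]]].
    pose proof (lim_gt _ psi (L - H0) (L - H0 - (1 - u) * L) Hpsi ltac:(nra)) as E2.
    destruct (filter_ex _ (filter_and _ _ E2 (Fr_ev xstar hstar))) as [x2 [A2 [B2 _]]].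
    exists x1, x2. split; auto. split; auto. rewrite !HF; auto. unfold xi. fold L.
    rewrite Ec; auto. unfold c. fold (psi x2).
    split.
    + apply (Rmult_lt_reg_l L); auto. rewrite <- Rmult_assoc, Rinv_r by lra. nra.
    + apply (Rmult_lt_reg_l L); auto. rewrite <- Rmult_assoc, Rinv_r by lra. nra.
Qed.

Lemma XI_pos th : 0 < XI th.
Proof. destruct (F_struct th) as [H0 [L [HL [HX _]]]]. rewrite HX. apply Rinv_0_lt_compat; auto. Qed.

Lemma fx_pos th x : D x -> 0 < fx th x.
Proof.
  intro Hx. unfold fX. pose proof (XI_pos th). pose proof (S2_pos th x Hx). pose proof (sd_pos th x).
  apply Rdiv_lt_0_compat; auto. apply Rmult_lt_0_compat; auto.
Qed.

Lemma F_d th x : D x -> is_derive (Fx th) x (fx th x).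
Proof.
  intro Hx. destruct (F_struct th) as [H0 [L [HL [HX [HF _]]]]].
  apply (is_derive_ext_loc (fun x => / L * (H0 + RInt (spd th) xstar x))).
  { apply (loc_imp D). apply dom_loc; auto. intros y Hy; symmetry; apply HF; auto. }
  change (fx th x) with (XI th * spd th x). rewrite HX.
  apply (is_derive_scal (fun x => H0 + RInt (spd th) xstar x)).
  replace (spd th x) with (plus 0 (spd th x)) by (unfold plus; simpl; ring).
  apply (is_derive_plus (fun _ => H0) (fun x => RInt (spd th) xstar x)).
  apply is_derive_cst.
  apply (is_derive_RInt (spd th) (fun x => RInt (spd th) xstar x) xstar x).
  - apply (loc_imp D). apply dom_loc; auto. intros y Hy. apply RInt_corr, spd_int; auto.
  - apply spd_cont; auto.
Qed.

Lemma F_D th x : D x -> Derive (Fx th) x = fx th x.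
Proof. intro; apply is_derive_unique, F_d; auto. Qed.

Lemma F_incr th x y : D x -> D y -> x < y -> Fx th x < Fx th y.
Proof.
  intros Hx Hy Hxy. destruct (F_struct th) as [H0 [L [HL [HX [HF _]]]]].
  rewrite (proj1 (HF x Hx)), (proj1 (HF y Hy)).
  rewrite <- (spd_Chasles th xstar x y); auto.
  pose proof (spd_RInt_pos th x y Hx Hy Hxy). pose proof (Rinv_0_lt_compat L HL).
  apply Rmult_lt_compat_l; auto. lra.
Qed.

Lemma F_range th x : D x -> 0 < Fx th x < 1.
Proof.
  intros Hx. destruct (F_struct th) as [H0 [L [HL [HX [HF _]]]]].
  destruct (HF x Hx) as [E [A B]]. rewrite E. pose proof (Rinv_0_lt_compat L HL).
  split. apply Rmult_lt_0_compat; auto.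
  apply (Rmult_lt_reg_l L); auto. rewrite <- Rmult_assoc, Rinv_r by lra. lra.
Qed.

Lemma F_onto th u : 0 < u < 1 -> ImS xl xr (Fx th) u.
Proof.
  intro Hu. destruct (F_struct th) as [H0 [L [HL [HX [HF HS]]]]].
  destruct (HS u Hu) as [x1 [x2 [D1 [D2 [A B]]]]].
  assert (x1 < x2) by (apply (incr_lt xl xr (Fx th)); auto; [apply F_incr|lra]).
  destruct (ivt_strict xl xr (Fx th) (fun x Hx => ex_intro _ _ (F_d th x Hx)) x1 x2 u D1 D2 H (conj A B))
    as [x [Hx E]].
  exists x; split; auto. apply (dom_between xl xr x1 x2); auto; lra.
Qed.

Lemma ImS_F th u : ImS xl xr (Fx th) u <-> 0 < u < 1.
Proof.
  split. intros [x [Hx <-]]. apply F_range; auto. apply F_onto.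
Qed.

Lemma F_C2 th : C2_on D (Fx th).
Proof.
  intros x Hx. split; [|split].
  - eexists; apply F_d; auto.
  - apply (ex_derive_ext_loc (fx th)). apply (loc_imp D). apply dom_loc; auto.
    intros y Hy; rewrite F_D; auto. apply fx_C1; auto.
  - apply (continuous_ext_loc _ (Derive (fx th))).
    apply (loc_imp D). apply dom_loc; auto. intros y Hy. simpl.
    apply (Derive_eq_on D); auto. apply dom_Open. intros; rewrite F_D; auto.
    apply fx_C1; auto.
Qed.

Lemma F_DD th x : D x -> Derive_n (Fx th) 2 x = Derive (fx th) x.
Proof.
  intro Hx. simpl. apply (Derive_eq_on D); auto. apply dom_Open. intros; rewrite F_D; auto.
Qed.

Lemma Finv_spec th u : 0 < u < 1 -> D (Fxinv th u) /\ Fx th (Fxinv th u) = u.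
Proof. intro Hu. apply (inv_spec xl xr (Fx th)). apply F_onto; auto. Qed.

Lemma Finv_F th x : D x -> Fxinv th (Fx th x) = x.
Proof. intro Hx. apply (inv_f xl xr (Fx th)); auto. apply F_incr. Qed.

Lemma mu_bar_at th x : D x -> mu_bar Theta xl xr xstar mu sig th (Fx th x) =
  mu th x * fx th x + / 2 * S2 th x * Derive (fx th) x.
Proof. intro Hx. unfold mu_bar. rewrite Finv_F; auto. Qed.

Lemma sig_bar_at th x : D x -> sig_bar Theta xl xr xstar mu sig th (Fx th x) = sig th x * fx th x.
Proof. intro Hx. unfold sig_bar. rewrite Finv_F; auto. Qed.

Lemma muY_at th V x : admissible_V xl xr V -> D x ->
  mu_Y Theta xl xr mu sig th V (V x) = Derive V x * mu th x + / 2 * Derive_n V 2 x * S2 th x /\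
  sig_Y Theta xl xr sig th V (V x) = Derive V x * sig th x.
Proof.
  intros [Vinc [VC2 Vpos]] Hx. unfold mu_Y, sig_Y, Uinv.
  assert (HI : ImS xl xr V (V x)) by (exists x; auto).
  pose proof (invD xl xr V Vinc VC2 Vpos (V x) HI) as E1.
  pose proof (invDD xl xr V Vinc VC2 Vpos (V x) HI) as E2.
  rewrite (inv_f xl xr V Vinc x Hx) in E1, E2 |- *.
  rewrite E1, E2. pose proof (Vpos x Hx). unfold sig2.
  split; field; lra.
Qed.

Lemma const_on (f : R -> R) a b : (forall t, D t -> is_derive f t 0) -> D a -> D b -> f a = f b.
Proof.
  intros Hd Ha Hb. destruct (Rtotal_order a b) as [H|[H|H]].
  - apply (eq_is_derive f a b); auto. intros t Ht. apply Hd. apply (dom_between xl xr a b); auto.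
  - subst; auto.
  - symmetry. apply (eq_is_derive f b a); auto. intros t Ht. apply Hd. apply (dom_between xl xr b a); auto.
Qed.

Definition transports th th' (G : R -> R) :=
  forall x, D x -> sig th' (G x) = Derive G x * sig th x /\
    mu th' (G x) = Derive G x * mu th x + / 2 * Derive_n G 2 x * S2 th x.

Lemma transport th th' G : C2_on D G -> (forall x, D x -> D (G x)) ->
  (forall y, D y -> exists x, D x /\ G x = y) -> (forall x, D x -> 0 < Derive G x) ->
  transports th th' G -> forall x, D x -> Fx th' (G x) = Fx th x.
Proof.
  intros GC2 Gmap Gonto Gpos HT.
  set (phi := fun x => II th x - II th' (G x) + ln (Derive G x)).
  assert (Hphi : forall x, D x -> is_derive phi x 0).
  { intros x Hx. pose proof (Gpos x Hx) as gp. pose proof (S2_pos th x Hx) as sp.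
    destruct (HT x Hx) as [T1 T2].
    assert (K1 : is_derive (fun x => II th' (G x)) x (Derive G x * kk th' (G x))).
    { apply (is_derive_comp (II th') G x). apply II_d; auto. apply (C2_d D); auto. }
    assert (K2 : is_derive (fun x => ln (Derive G x)) x (Derive_n G 2 x * / Derive G x)).
    { apply (is_derive_comp ln (Derive G) x). apply is_derive_ln; auto. apply (C2_dd D); auto. }
    assert (K3 := II_d th x Hx).
    replace 0 with (kk th x - Derive G x * kk th' (G x) + Derive_n G 2 x * / Derive G x).
    { unfold phi. apply (is_derive_plus (fun x => II th x - II th' (G x)) (fun x => ln (Derive G x))); auto.
      apply (is_derive_minus (II th) (fun x => II th' (G x))); auto. }
    assert (sig th x <> 0) by (intro Z; unfold sig2 in sp; rewrite Z in sp; lra).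
    unfold sig2 in *. rewrite T1, T2. simpl. field. split; [intro; lra|auto]. }
  set (phi0 := phi xstar).
  assert (Hc : forall x, D x -> phi x = phi0).
  { intros x Hx. apply (const_on phi); auto. }
  set (K := XI th' / XI th * exp (- phi0)).
  assert (HK : 0 < K).
  { unfold K. pose proof (XI_pos th); pose proof (XI_pos th'). pose proof (exp_pos (- phi0)).
    apply Rmult_lt_0_compat; auto. apply Rdiv_lt_0_compat; auto. }
  assert (Hr : forall x, D x -> fx th' (G x) * Derive G x = K * fx th x).
  { intros x Hx. pose proof (Gpos x Hx) as gp. pose proof (S2_pos th x Hx) as sp.
    destruct (HT x Hx) as [T1 T2]. pose proof (Hc x Hx) as E. unfold phi in E.
    assert (EG : Derive G x * exp (- II th' (G x)) = exp phi0 * exp (- II th x)).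
    { rewrite <- (exp_ln (Derive G x)) by auto. rewrite <- !exp_plus. f_equal. lra. }
    assert (ES : S2 th' (G x) = Derive G x ^ 2 * S2 th x) by (unfold sig2; rewrite T1; ring).
    unfold fX, K, scale_dens. rewrite ES.
    pose proof (XI_pos th); pose proof (XI_pos th').
    set (eA := exp (- II th x)) in *. set (eB := exp (- II th' (G x))) in *.
    assert (0 < eA) by apply exp_pos. assert (0 < eB) by apply exp_pos. pose proof (exp_pos phi0).
    assert (EB : eB = exp phi0 * eA / Derive G x) by (apply (Rmult_eq_reg_l (Derive G x)); [rewrite EG; field|]; lra).
    rewrite EB, exp_Ropp. field. repeat split; lra. }
  set (Psi := fun x => Fx th' (G x) - K * Fx th x).
  assert (HPsi : forall x, D x -> Psi x = Psi xstar).
  { intros x Hx. apply (const_on Psi); auto. intros t Ht.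
    replace 0 with (fx th' (G t) * Derive G t - K * fx th t) by (rewrite Hr; auto; ring).
    unfold Psi. apply (is_derive_minus (fun x => Fx th' (G x)) (fun x => K * Fx th x)).
    - rewrite Rmult_comm. apply (is_derive_comp (Fx th') G t). apply F_d; auto. apply (C2_d D); auto.
    - apply (is_derive_scal (Fx th)). apply F_d; auto. }
  set (c0 := Psi xstar).
  assert (Hin : forall v, 0 < v < 1 -> 0 < K * v + c0 < 1).
  { intros v Hv. destruct (Finv_spec th v Hv) as [A B]. pose proof (HPsi _ A) as H. fold c0 in H. unfold Psi in H.
    rewrite B in H. pose proof (F_range th' (G (Fxinv th v)) (Gmap _ A)). lra. }
  assert (Hcov : forall u, 0 < u < 1 -> exists v, 0 < v < 1 /\ u = K * v + c0).
  { intros u Hu. destruct (Finv_spec th' u Hu) as [A B].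
    destruct (Gonto _ A) as [x [Dx Ex]]. exists (Fx th x). split. apply F_range; auto.
    pose proof (HPsi x Dx) as H. fold c0 in H. unfold Psi in H. rewrite Ex, B in H. lra. }
  assert (Hc0 : c0 = 0).
  { destruct (Rtotal_order c0 0) as [H|[H|H]]; auto; exfalso.
    - set (v := Rmin (1/2) (- c0 / (2 * K))).
      assert (v <= 1/2) by apply Rmin_l. assert (v <= - c0 / (2 * K)) by apply Rmin_r.
      assert (0 < v) by (apply Rmin_pos; [lra| apply Rdiv_lt_0_compat; lra]).
      pose proof (Hin v ltac:(lra)).
      assert (K * v <= - c0 / 2).
      { apply Rle_trans with (K * (- c0 / (2 * K))). apply Rmult_le_compat_l; lra.
        right; field; lra. }
      lra.
    - set (u := Rmin c0 1 / 2).
      assert (Rmin c0 1 <= c0) by apply Rmin_l. assert (Rmin c0 1 <= 1) by apply Rmin_r.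
      assert (0 < Rmin c0 1) by (apply Rmin_pos; lra).
      destruct (Hcov u ltac:(unfold u; lra)) as [v [Hv E]]. unfold u in E. nra. }
  assert (HK1 : K = 1).
  { destruct (Rtotal_order K 1) as [H|[H|H]]; auto; exfalso.
    - destruct (Hcov ((K + 1) / 2) ltac:(lra)) as [v [Hv E]]. rewrite Hc0 in E. nra.
    - pose proof (Hin ((/ K + 1) / 2)).
      assert (/ K < 1) by (rewrite <- Rinv_1; apply Rinv_lt_contravar; lra).
      assert (0 < / K) by (apply Rinv_0_lt_compat; lra).
      specialize (H0 ltac:(lra)). rewrite Hc0 in H0.
      replace (K * ((/ K + 1) / 2) + 0) with ((1 + K) / 2) in H0 by (field; lra). lra. }
  intros x Hx. pose proof (HPsi x Hx) as H. fold c0 in H. unfold Psi in H. rewrite Hc0, HK1 in H. lra.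
Qed.

Lemma alg h1 h2 g1 g2 c1 c2 a s b t : h1 <> 0 -> c1 = h1 * g1 -> c2 = h2 * g1^2 + h1 * g2 ->
  ((c1 * a + /2 * c2 * s^2 = h1 * b + /2 * h2 * t^2 /\ c1 * s = h1 * t) <->
   (t = g1 * s /\ b = g1 * a + /2 * g2 * s^2)).
Proof.
  intros H1 -> ->. split.
  - intros [E1 E2].
    assert (Et : t = g1 * s) by (apply (Rmult_eq_reg_l h1); auto; rewrite <- E2; ring).
    split; auto. subst t. apply (Rmult_eq_reg_l h1); auto.
    replace (h1 * b) with (h1 * b + / 2 * h2 * (g1 * s) ^ 2 - / 2 * h2 * (g1 * s) ^ 2) by ring.
    rewrite <- E1. ring.
  - intros [-> ->]. split; ring.
Qed.

Lemma comp_eq (H K G : R -> R) x : C2_on D H -> C2_on D G -> (forall x, D x -> D (G x)) ->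
  (forall x, D x -> K x = H (G x)) -> D x ->
  Derive K x = Derive H (G x) * Derive G x /\
  Derive_n K 2 x = Derive_n H 2 (G x) * (Derive G x)^2 + Derive H (G x) * Derive_n G 2 x.
Proof.
  intros HH HG Hm HK Hx. split.
  - rewrite (Derive_eq_on D K (fun y => H (G y)) x (dom_Open _ _) Hx HK).
    apply (comp_D D D H G HH HG Hm x Hx).
  - rewrite (Derive2_eq_on D K (fun y => H (G y)) x (dom_Open _ _) Hx HK).
    apply (comp_DD D D H G (dom_Open _ _) HH HG Hm x Hx).
Qed.

Definition tr_at th0 th (G : R -> R) x :=
  sig th (G x) = Derive G x * sig th0 x /\
  mu th (G x) = Derive G x * mu th0 x + / 2 * Derive_n G 2 x * S2 th0 x.

Lemma bar_iff th0 th G x : C2_on D G -> (forall x, D x -> D (G x)) ->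
  (forall x, D x -> Fx th (G x) = Fx th0 x) -> D x ->
  ((mu_bar Theta xl xr xstar mu sig th0 (Fx th0 x) = mu_bar Theta xl xr xstar mu sig th (Fx th0 x) /\
    sig_bar Theta xl xr xstar mu sig th0 (Fx th0 x) = sig_bar Theta xl xr xstar mu sig th (Fx th0 x))
   <-> tr_at th0 th G x).
Proof.
  intros GC2 Gm HF Hx.
  destruct (comp_eq (Fx th) (Fx th0) G x (F_C2 th) GC2 Gm) as [E1 E2]; auto.
  { intros; symmetry; auto. }
  rewrite F_D in E1 by auto. rewrite F_D in E1 by auto.
  rewrite F_DD in E2 by auto. rewrite F_DD in E2 by auto. rewrite F_D in E2 by auto.
  rewrite <- (HF x Hx) at 2. rewrite <- (HF x Hx) at 3.
  rewrite !mu_bar_at, !sig_bar_at by auto.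
  pose proof (fx_pos th (G x) (Gm x Hx)).
  pose proof (alg (fx th (G x)) (Derive (fx th) (G x)) (Derive G x) (Derive_n G 2 x)
     (fx th0 x) (Derive (fx th0) x) (mu th0 x) (sig th0 x) (mu th (G x)) (sig th (G x))
     ltac:(intro; lra) ltac:(rewrite E1; ring) E2) as A.
  unfold tr_at. unfold sig2. rewrite <- A. split; intros [B1 B2]; split; lra.
Qed.

Lemma obs_iff th0 th V W G x : admissible_V xl xr V -> admissible_V xl xr W ->
  C2_on D G -> (forall x, D x -> D (G x)) -> (forall x, D x -> V x = W (G x)) -> D x ->
  ((mu_Y Theta xl xr mu sig th0 V (V x) = mu_Y Theta xl xr mu sig th W (V x) /\
    sig_Y Theta xl xr sig th0 V (V x) = sig_Y Theta xl xr sig th W (V x)) <-> tr_at th0 th G x).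
Proof.
  intros HV HW GC2 Gm HVW Hx.
  destruct HW as [Winc [WC2 Wpos]] eqn:EW.
  destruct (comp_eq W V G x WC2 GC2 Gm HVW Hx) as [E1 E2].
  rewrite (HVW x Hx) at 2. rewrite (HVW x Hx) at 3.
  destruct (muY_at th0 V x HV Hx) as [M1 S1].
  destruct (muY_at th W (G x) HW (Gm x Hx)) as [M2 S2'].
  rewrite M1, S1, M2, S2'.
  pose proof (Wpos (G x) (Gm x Hx)).
  pose proof (alg (Derive W (G x)) (Derive_n W 2 (G x)) (Derive G x) (Derive_n G 2 x)
     (Derive V x) (Derive_n V 2 x) (mu th0 x) (sig th0 x) (mu th (G x)) (sig th (G x))
     ltac:(intro; lra) ltac:(rewrite E1; ring) E2) as A.
  unfold tr_at. unfold sig2. rewrite <- A. split; intros [B1 B2]; split; lra.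
Qed.

Lemma FinvC2 th : C2_on (ImS xl xr (Fx th)) (Fxinv th).
Proof.
  apply (inv_C2 xl xr (Fx th) (F_incr th) (F_C2 th)).
  intros x Hx; rewrite F_D; auto; apply fx_pos; auto.
Qed.

Theorem main theta V : admissible_V xl xr V ->
  identified Theta xl xr mu sig theta V <->
  (forall th' : Theta,
     (forall u, 0 < u < 1 ->
        mu_bar Theta xl xr xstar mu sig theta u = mu_bar Theta xl xr xstar mu sig th' u /\
        sig_bar Theta xl xr xstar mu sig theta u = sig_bar Theta xl xr xstar mu sig th' u)
     <-> theta = th').
Proof.
  intros HV. destruct HV as [Vinc [VC2 Vpos]] eqn:EV. split.
  - intros Hid th'. split; [|intros <-; auto].
    intros Hbar.
    set (G := fun x => Fxinv th' (Fx theta x)).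
    set (Gi := fun x => Fxinv theta (Fx th' x)).
    set (W := fun x => V (Gi x)).
    assert (Gm : forall x, D x -> D (G x) /\ Fx th' (G x) = Fx theta x).
    { intros x Hx. apply Finv_spec. apply F_range; auto. }
    assert (Gim : forall x, D x -> D (Gi x) /\ Fx theta (Gi x) = Fx th' x).
    { intros x Hx. apply Finv_spec. apply F_range; auto. }
    assert (GiG : forall x, D x -> Gi (G x) = x).
    { intros x Hx. unfold Gi. rewrite (proj2 (Gm x Hx)). apply Finv_F; auto. }
    assert (GC2 : C2_on D G).
    { apply (comp_C2 D (ImS xl xr (Fx th')) (Fxinv th') (Fx theta) (dom_Open _ _) (FinvC2 th') (F_C2 theta)).
      intros x Hx. apply F_onto, F_range; auto. }
    assert (GiC2 : C2_on D Gi).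
    { apply (comp_C2 D (ImS xl xr (Fx theta)) (Fxinv theta) (Fx th') (dom_Open _ _) (FinvC2 theta) (F_C2 th')).
      intros x Hx. apply F_onto, F_range; auto. }
    assert (WC2 : C2_on D W).
    { apply (comp_C2 D D V Gi (dom_Open _ _) VC2 GiC2). intros x Hx; apply Gim; auto. }
    assert (Gipos : forall x, D x -> 0 < Derive Gi x).
    { intros x Hx. unfold Gi.
      rewrite (comp_D D (ImS xl xr (Fx theta)) (Fxinv theta) (Fx th') (FinvC2 theta) (F_C2 th')); auto;
        [|intros y Hy; apply F_onto, F_range; auto].
      unfold FXinv. rewrite (invD xl xr (Fx theta) (F_incr theta) (F_C2 theta)); auto.
      3: apply F_onto, F_range; auto.
      2: intros y Hy; rewrite F_D; auto; apply fx_pos; auto.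
      fold (Fxinv theta (Fx th' x)). fold (Gi x).
      rewrite !F_D; auto; [|apply Gim; auto].
      apply Rmult_lt_0_compat. apply Rinv_0_lt_compat, fx_pos, Gim; auto. apply fx_pos; auto. }
    assert (HW : admissible_V xl xr W).
    { split; [|split; auto].
      - intros x y Hx Hy Hxy. unfold W. apply Vinc; try apply Gim; auto.
        unfold Gi, FXinv. apply (inv_incr xl xr (Fx theta) (F_incr theta)).
        apply F_onto, F_range; auto. apply F_onto, F_range; auto. apply F_incr; auto.
      - intros x Hx. unfold W.
        rewrite (comp_D D D V Gi VC2 GiC2); auto; [|intros y Hy; apply Gim; auto].
        apply Rmult_lt_0_compat. apply Vpos, Gim; auto. apply Gipos; auto. }
    assert (HVW : forall x, D x -> V x = W (G x)).
    { intros x Hx. unfold W. rewrite GiG; auto. }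
    assert (Hobs : obs_equiv Theta xl xr mu sig theta V th' W).
    { split.
      - intros y; split; intros [x [Hx <-]].
        + exists (G x). split. apply Gm; auto. symmetry; apply HVW; auto.
        + exists (Gi x). split. apply Gim; auto. reflexivity.
      - intros y [x [Hx <-]].
        apply (obs_iff theta th' V W G x HV HW GC2 (fun x Hx => proj1 (Gm x Hx)) HVW Hx).
        apply (bar_iff theta th' G x GC2 (fun x Hx => proj1 (Gm x Hx)) (fun x Hx => proj2 (Gm x Hx)) Hx).
        apply Hbar. apply F_range; auto. }
    destruct (Hid th' W HW Hobs) as [E _]. exact E.
  - intros Hrhs th' W HW [Hdom Hobs].
    pose proof HW as HW0; unfold admissible_V in HW0; destruct HW0 as [Winc [WC2 Wpos]].
    set (G := fun x => inv_on W D (V x)).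
    assert (HIm : forall x, D x -> ImS xl xr W (V x)).
    { intros x Hx. apply (proj1 (Hdom (V x))). exists x; auto. }
    assert (Gm : forall x, D x -> D (G x) /\ W (G x) = V x).
    { intros x Hx. apply (inv_spec xl xr W). apply HIm; auto. }
    assert (GC2 : C2_on D G).
    { apply (comp_C2 D (ImS xl xr W) (inv_on W D) V (dom_Open _ _) (inv_C2 xl xr W Winc WC2 Wpos) VC2 HIm). }
    assert (Gonto : forall y, D y -> exists x, D x /\ G x = y).
    { intros y Hy. destruct (proj2 (Hdom (W y))) as [x [Hx Ex]]. exists y; auto.
      exists x. split; auto. unfold G. rewrite Ex. apply (inv_f xl xr W Winc); auto. }
    assert (Gpos : forall x, D x -> 0 < Derive G x).
    { intros x Hx. unfold G.
      rewrite (comp_D D (ImS xl xr W) (inv_on W D) V (inv_C2 xl xr W Winc WC2 Wpos) VC2 HIm); auto.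
      rewrite (invD xl xr W Winc WC2 Wpos); auto.
      apply Rmult_lt_0_compat. apply Rinv_0_lt_compat, Wpos. apply Gm; auto. apply Vpos; auto. }
    assert (HVW : forall x, D x -> V x = W (G x)).
    { intros x Hx. symmetry; apply Gm; auto. }
    assert (Htr : forall x, D x -> tr_at theta th' G x).
    { intros x Hx. apply (obs_iff theta th' V W G x HV HW GC2 (fun x Hx => proj1 (Gm x Hx)) HVW Hx).
      apply Hobs. exists x; auto. }
    pose proof (transport theta th' G GC2 (fun x Hx => proj1 (Gm x Hx)) Gonto Gpos Htr) as HF.
    assert (Hbar : forall u, 0 < u < 1 ->
        mu_bar Theta xl xr xstar mu sig theta u = mu_bar Theta xl xr xstar mu sig th' u /\
        sig_bar Theta xl xr xstar mu sig theta u = sig_bar Theta xl xr xstar mu sig th' u).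
    { intros u Hu. destruct (Finv_spec theta u Hu) as [A B]. rewrite <- B.
      apply (bar_iff theta th' G _ GC2 (fun x Hx => proj1 (Gm x Hx)) HF A). apply Htr; auto. }
    pose proof (proj1 (Hrhs th') Hbar) as E. subst th'.
    split; auto. intros x Hx.
    assert (G x = x).
    { apply (incr_inj xl xr (Fx theta) (F_incr theta)); auto. apply Gm; auto. }
    rewrite (HVW x Hx), H. reflexivity.
Qed.

End Model.

Theorem corollary6 (Theta : Type) (xl xr : Rbar) (xstar : R)
  (mu sig : Theta -> R -> R) (theta : Theta) (V : R -> R) :
  Rbar_lt xl xr ->
  in_dom xl xr xstar ->
  (forall th : Theta, assumptions_abc Theta xl xr xstar mu sig th) ->
  admissible_V xl xr V ->
  identified Theta xl xr mu sig theta V <->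
  (forall th' : Theta,
     (forall u, 0 < u < 1 ->
        mu_bar Theta xl xr xstar mu sig theta u = mu_bar Theta xl xr xstar mu sig th' u /\
        sig_bar Theta xl xr xstar mu sig theta u = sig_bar Theta xl xr xstar mu sig th' u)
     <-> theta = th').
Proof.
  intros H1 H2 H3 H4. apply main; auto.
Qed.
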